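(* Let $p>1$, $\beta=1/(p-1)$, $\gamma=\frac{p-2}{2(p-1)}$, $\sigma\in\{-1,1\}$, and $A>0$. Let $\phi\in C^2([A,\infty))$ be a solution of $$\sigma\phi''=\tfrac12 y\phi'-\gamma\phi-|\phi'|^p\quad\text{on }[A,\infty)$$ such that, for some $C>0$, $\phi'(y)\ge Cy^\beta$ for all $y\ge A$, and $|\phi''(y)|=o(y^{\beta+1})$ as $y\to\infty$. Then $$\lim_{y\to\infty}\frac{\phi(y)}{y^{\beta+1}}=L:=\frac{p^{-\beta}}{\beta+1}.$$ *)

(* Defs.v *)
From Stdlib Require Import Reals.
From Coquelicot Require Import Coquelicot.
Open Scope R_scope.

(* x^a for real a, with the convention 0^a = 0 (a > 0); Stdlib's Rpower 0 a = 1. *)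
Definition rpow (x a : R) : R := if Req_EM_T x 0 then 0 else Rpower x a.

(* Main.v *)
Require Import Defs.
From Stdlib Require Import Reals Lra Classical.
From Coquelicot Require Import Coquelicot.
Open Scope R_scope.

Lemma Rabs_lt_between x y : Rabs x < y <-> - y < x < y.
Proof. split; [intros H; destruct (Rabs_def2 _ _ H); split; auto|intros [? ?]; apply Rabs_def1; auto]. Qed.

Lemma cont_eps f x : continuity_pt f x -> forall eps, 0 < eps ->
  exists r, 0 < r /\ forall s, Rabs (s - x) < r -> Rabs (f s - f x) < eps.
Proof.
  intros Hc eps He. destruct (Hc eps He) as [r [Hr H]]. exists r. split; [lra|].
  intros s Hs. destruct (Req_dec s x) as [->|Hne].
  - rewrite Rminus_diag, Rabs_R0; lra.
  - apply (H s). split; [split; [exact I| auto]|exact Hs].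
Qed.

Lemma der_cont f x l : derivable_pt_lim f x l -> continuity_pt f x.
Proof. intros H. apply derivable_continuous_pt. exists l. exact H. Qed.

Definition DynH (A c : R) (g h : R -> R) :=
  0 < A /\ 0 < c /\ (forall y, A < y -> derivable_pt_lim g y (c * (h y - g y) / y))
  /\ (forall y, A < y -> continuity_pt h y).

Lemma DynH_opp A c g h : DynH A c g h -> DynH A c (fun y => - g y) (fun y => - h y).
Proof.
  intros [HA [Hc [HD Hh]]]. repeat split; auto.
  - intros y Hy. replace (c * (- h y - - g y) / y) with (- (c * (h y - g y) / y)) by (field; lra).
    apply derivable_pt_lim_opp. auto.
  - intros y Hy. apply continuity_pt_opp. auto.
Qed.

Lemma mono_up A c g h a b : DynH A c g h -> A < a -> a <= b ->
  (forall t, a <= t <= b -> g t <= h t) -> g a <= g b.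
Proof.
  intros [HA [Hc [HD Hh]]] Ha Hab H.
  destruct (Req_dec a b) as [->|Hne]; [lra|].
  destruct (MVT_cor2 g (fun y => c * (h y - g y) / y) a b) as [x [Hx1 Hx2]]; [lra| |].
  - intros t Ht. apply HD. lra.
  - assert (0 <= c * (h x - g x) / x).
    { unfold Rdiv. apply Rmult_le_pos; [apply Rmult_le_pos; [lra| ]|].
      assert (g x <= h x) by (apply H; lra). lra.
      left; apply Rinv_0_lt_compat; lra. }
    assert (0 <= c * (h x - g x) / x * (b - a)) by (apply Rmult_le_pos; lra). lra.
Qed.

Lemma mono_down A c g h a b : DynH A c g h -> A < a -> a <= b ->
  (forall t, a <= t <= b -> h t <= g t) -> g b <= g a.
Proof.
  intros HD Ha Hab H. pose proof (mono_up A c _ _ a b (DynH_opp _ _ _ _ HD) Ha Hab) as K.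
  simpl in K. cut (- g a <= - g b). lra. apply K. intros t Ht. specialize (H t Ht). lra.
Qed.

Lemma drift_up A c g h Y d : DynH A c g h -> A < Y -> 0 < d ->
  (forall t, Y <= t -> d <= h t - g t) -> forall M, exists t, Y <= t /\ M < g t.
Proof.
  intros HDy HY Hd H M. destruct HDy as [HA [Hc [HD Hh]]].
  set (k := fun t => g t - c * d * ln t).
  assert (Kmono : forall t, Y <= t -> k Y <= k t).
  { intros t Ht. destruct (Req_dec Y t) as [->|Hne]; [lra|].
    destruct (MVT_cor2 k (fun y => c * (h y - g y) / y - c * d * / y) Y t) as [x [Hx1 Hx2]]; [lra| |].
    - intros s Hs. unfold k. apply derivable_pt_lim_minus. apply HD; lra.
      apply derivable_pt_lim_scal. apply derivable_pt_lim_ln. lra.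
    - assert (0 <= c * (h x - g x) / x - c * d * / x).
      { replace (c * (h x - g x) / x - c * d * / x) with (c * (h x - g x - d) / x) by (field; lra).
        unfold Rdiv. apply Rmult_le_pos; [apply Rmult_le_pos; [lra| ]|].
        assert (d <= h x - g x) by (apply H; lra). lra.
        left; apply Rinv_0_lt_compat; lra. }
      assert (0 <= (c * (h x - g x) / x - c * d * / x) * (t - Y)) by (apply Rmult_le_pos; lra). lra. }
  set (x := Rabs (M - g Y) / (c * d) + 1).
  assert (Hx : 0 < x). { unfold x. assert (0 <= Rabs (M - g Y) / (c*d)).
    unfold Rdiv. apply Rmult_le_pos. apply Rabs_pos. left; apply Rinv_0_lt_compat; nra. lra. }
  exists (Y * exp x). assert (1 < exp x). { rewrite <- exp_0. apply exp_increasing. lra. }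
  split. nra.
  specialize (Kmono (Y * exp x)). unfold k in Kmono.
  rewrite ln_mult, ln_exp in Kmono by (try lra; apply exp_pos).
  assert (g Y + c * d * x <= g (Y * exp x)) by (assert (Y <= Y * exp x) by nra; specialize (Kmono H1); nra).
  assert (c * d * x = Rabs (M - g Y) + c * d) by (unfold x; field; nra).
  pose proof (Rle_abs (M - g Y)). nra.
Qed.

Lemma barrier A c g h Y M : DynH A c g h -> A < Y ->
  (forall t, Y <= t -> M <= g t -> h t < g t) -> forall t, Y <= t -> g t <= Rmax (g Y) M.
Proof.
  intros HDy HY H t Ht. pose proof HDy as [HA [Hc [HD Hh]]].
  destruct (continuity_ab_maj g Y t Ht) as [x [Hmax Hx]].
  { intros s Hs. apply (der_cont _ _ _ (HD s ltac:(lra))). }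
  destruct (Rle_or_lt (g t) (Rmax (g Y) M)) as [|Hgt]; [auto|exfalso].
  assert (Hgx : g t <= g x) by (apply Hmax; lra).
  assert (HgY : g Y <= Rmax (g Y) M) by apply Rmax_l.
  assert (HM : M <= Rmax (g Y) M) by apply Rmax_r.
  assert (HYx : Y < x). { destruct Hx as [[|<-] _]; auto. lra. }
  destruct (cont_eps g x (der_cont _ _ _ (HD x ltac:(lra))) (g x - M) ltac:(lra)) as [r [Hr Hc']].
  set (s := x - Rmin r (x - Y) / 2).
  assert (Hmin1 : Rmin r (x - Y) <= r) by apply Rmin_l.
  assert (Hmin2 : Rmin r (x - Y) <= x - Y) by apply Rmin_r.
  assert (Hmin3 : 0 < Rmin r (x - Y)) by (apply Rmin_glb_lt; lra).
  assert (Hs1 : Y < s) by (unfold s; lra). assert (Hs2 : s < x) by (unfold s; lra).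
  assert (Hle : g x <= g s).
  { apply (mono_down A c g h s x HDy); try lra.
    intros u Hu. left. apply H. lra.
    assert (Rabs (u - x) < r). { rewrite Rabs_left1 by lra. unfold s in Hu. lra. }
    specialize (Hc' u H0). rewrite Rabs_lt_between in Hc'. lra. }
  assert (g s <= g x) by (apply Hmax; lra).
  destruct (MVT_cor2 g (fun y => c * (h y - g y) / y) s x) as [z [Hz1 Hz2]]; [lra| |].
  - intros u Hu. apply HD. lra.
  - assert (Hz3 : h z < g z).
    { apply H. lra. assert (Rabs (z - x) < r). { rewrite Rabs_left1 by lra. unfold s in Hz2. lra. }
      specialize (Hc' z H1). rewrite Rabs_lt_between in Hc'. lra. }
    assert (c * (h z - g z) / z < 0).
    { unfold Rdiv. apply Rmult_neg_pos. nra. apply Rinv_0_lt_compat; lra. }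
    assert (c * (h z - g z) / z * (x - s) < 0) by (apply Rmult_neg_pos; lra). lra.
Qed.

Lemma first_cross q t0 t1 : t0 < t1 -> (forall t, t0 <= t <= t1 -> continuity_pt q t) ->
  q t0 < 0 -> 0 <= q t1 -> exists z, t0 < z <= t1 /\ q z = 0 /\ forall t, t0 <= t < z -> q t < 0.
Proof.
  intros Ht Hc H0 H1.
  set (E := fun s => t0 <= s <= t1 /\ forall t, t0 <= t <= s -> q t < 0).
  destruct (completeness E) as [z [Hub Hlub]].
  { exists t1. intros s [Hs _]. lra. }
  { exists t0. split; [lra|]. intros t Ht'. replace t with t0 by lra. auto. }
  assert (Hz0 : t0 <= z) by (apply Hub; split; [lra|]; intros t Ht'; replace t with t0 by lra; auto).
  assert (Hz1 : z <= t1) by (apply Hlub; intros s [Hs _]; lra).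
  assert (Hi : forall t, t0 <= t < z -> q t < 0).
  { intros t Ht'. destruct (Rlt_or_le (q t) 0) as [|Hq]; auto. exfalso.
    assert (z <= t); [|lra]. apply Hlub. intros s [Hs Hs2].
    destruct (Rle_or_lt s t); auto. specialize (Hs2 t ltac:(lra)). lra. }
  assert (Hii : 0 <= q z).
  { destruct (Rle_or_lt 0 (q z)) as [|Hq]; auto. exfalso.
    destruct (Req_dec z t1) as [->|Hne]; [lra|].
    destruct (cont_eps q z (Hc z ltac:(lra)) (- q z) ltac:(lra)) as [r [Hr Hr']].
    set (s := Rmin (z + r/2) t1).
    assert (s <= t1) by apply Rmin_r.
    assert (z < s) by (apply Rmin_glb_lt; lra).
    assert (s <= z + r/2) by apply Rmin_l.
    assert (s <= z); [|lra]. apply Hub. split; [lra|].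
    intros t Ht'. destruct (Rlt_or_le t z). apply Hi; lra.
    assert (Rabs (t - z) < r) by (rewrite Rabs_right; lra).
    specialize (Hr' t H5). rewrite Rabs_lt_between in Hr'. lra. }
  assert (Htz : t0 < z). { destruct Hz0 as [|<-]; auto. lra. }
  assert (Hiii : q z <= 0).
  { destruct (Rle_or_lt (q z) 0) as [|Hq]; auto. exfalso.
    destruct (cont_eps q z (Hc z ltac:(lra)) (q z) ltac:(lra)) as [r [Hr Hr']].
    set (t := Rmax t0 (z - r/2)).
    assert (t0 <= t) by apply Rmax_l. assert (z - r/2 <= t) by apply Rmax_r.
    assert (t < z) by (apply Rmax_lub_lt; lra).
    assert (q t < 0) by (apply Hi; lra).
    assert (Rabs (t - z) < r) by (rewrite Rabs_left; lra).
    specialize (Hr' t H5). rewrite Rabs_lt_between in Hr'. lra. }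
  exists z. split; [lra|]. split; [lra|]. exact Hi.
Qed.

Lemma reach_low A c g h Y m d : DynH A c g h -> A < Y -> 0 < d ->
  (forall t, Y <= t -> g t <= m -> d <= h t - g t) -> exists Y', A < Y' /\ forall t, Y' <= t -> m <= g t.
Proof.
  intros HD HY Hd H.
  destruct (classic (exists t0, Y <= t0 /\ m <= g t0)) as [[t0 [Ht0 Hm]]|Hn].
  - exists t0. split; [lra|]. intros t Ht.
    pose proof (barrier A c _ _ t0 (- m) (DynH_opp _ _ _ _ HD) ltac:(lra)) as B.
    simpl in B. assert (- g t <= Rmax (- g t0) (- m)).
    { apply B; auto. intros s Hs Hs2. assert (d <= h s - g s) by (apply H; lra). lra. }
    rewrite Rmax_right in H0 by lra. lra.
  - exfalso. destruct (drift_up A c g h Y d HD HY Hd) with (M := m) as [t [Ht1 Ht2]].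
    + intros t Ht. apply H; auto. destruct (Rle_or_lt (g t) m); auto. exfalso; apply Hn; exists t; split; lra.
    + apply Hn. exists t. split; lra.
Qed.

Lemma reach_high A c g h Y m d : DynH A c g h -> A < Y -> 0 < d ->
  (forall t, Y <= t -> m <= g t -> d <= g t - h t) -> exists Y', A < Y' /\ forall t, Y' <= t -> g t <= m.
Proof.
  intros HD HY Hd H.
  destruct (reach_low A c _ _ Y (- m) d (DynH_opp _ _ _ _ HD) HY Hd) as [Y' [HY' H']].
  - intros t Ht Hm. simpl in Hm. assert (d <= g t - h t) by (apply H; lra). lra.
  - exists Y'. split; auto. intros t Ht. specialize (H' t Ht). simpl in H'. lra.
Qed.

Theorem dyn_conv A c g h C us :
  DynH A c g h -> 0 < C -> (forall y, A < y -> C <= h y) -> 0 < us ->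
  (forall e, 0 < e -> exists d, 0 < d /\ exists Y, forall y, Y < y -> us + e <= g y -> h y <= g y - d) ->
  (forall e a, 0 < e < us -> 0 < a -> exists d, 0 < d /\ exists Y, forall y, Y < y ->
      a <= g y <= us - e -> d <= Rabs (h y - g y)) ->
  forall e, 0 < e < us -> exists Y, forall y, Y < y -> Rabs (g y - us) <= e.
Proof.
  intros HDy HC HhC Hus GU GL e He.
  pose proof HDy as [HA [Hc [HD Hh]]].
  destruct (reach_low A c g h (A+1) (C/2) (C/2) HDy ltac:(lra) ltac:(lra)) as [Y1 [HY1 Hlow]].
  { intros t Ht Hg. assert (C <= h t) by (apply HhC; lra). lra. }
  destruct (GU e ltac:(lra)) as [d1 [Hd1 [Yu HYu]]].
  destruct (reach_high A c g h (Rmax Yu A + 1) (us + e) d1 HDy) as [Y2 [HY2 Hup]]; auto.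
  { pose proof (Rmax_r Yu A). lra. }
  { intros t Ht Hg. pose proof (Rmax_l Yu A). assert (h t <= g t - d1) by (apply HYu; lra; lra). lra. }
  destruct (GL e (C/2) He ltac:(lra)) as [d2 [Hd2 [Yl HYl]]].
  set (Y3 := Rmax (Rmax Y1 Yl) A + 1).
  assert (HY3a : A < Y3) by (unfold Y3; pose proof (Rmax_r (Rmax Y1 Yl) A); lra).
  assert (HY3b : Y1 < Y3) by (unfold Y3; pose proof (Rmax_l (Rmax Y1 Yl) A); pose proof (Rmax_l Y1 Yl); lra).
  assert (HY3c : Yl < Y3) by (unfold Y3; pose proof (Rmax_l (Rmax Y1 Yl) A); pose proof (Rmax_r Y1 Yl); lra).
  assert (Claim : forall t, Y3 <= t -> g t <= us - e -> d2 <= h t - g t).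
  { intros t0 Ht0 Hg0.
    assert (Hgap : forall t, Y3 <= t -> g t <= us - e -> d2 <= Rabs (h t - g t)).
    { intros t Ht Hg. apply HYl. lra. split; auto. apply Hlow. lra. }
    pose proof (Hgap t0 Ht0 Hg0) as G0.
    destruct (Rle_or_lt 0 (h t0 - g t0)) as [Hp|Hn].
    - rewrite Rabs_right in G0 by lra. exact G0.
    - exfalso.
      assert (Hneg : forall t1, t0 < t1 -> h t1 - g t1 < 0).
      { intros t1 Ht1. destruct (Rlt_or_le (h t1 - g t1) 0) as [|Hq]; auto. exfalso.
        destruct (first_cross (fun y => h y - g y) t0 t1 Ht1) as [z [Hz [Hz0 Hzb]]]; auto.
        { intros t Ht. apply continuity_pt_minus. apply Hh; lra. apply (der_cont _ _ _ (HD t ltac:(lra))). }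
        assert (g z <= g t0).
        { apply (mono_down A c g h t0 z HDy); try lra. intros t Ht.
          destruct (Req_dec t z) as [->|]. simpl in Hz0; lra. assert (h t - g t < 0) by (apply Hzb; lra). lra. }
        pose proof (Hgap z ltac:(lra) ltac:(lra)). simpl in Hz0. rewrite Hz0, Rabs_R0 in H0. lra. }
      destruct (drift_up A c _ _ t0 d2 (DynH_opp _ _ _ _ HDy) ltac:(lra) Hd2) with (M := - (C/2)) as [t [Ht1 Ht2]].
      + intros t Ht. simpl.
        assert (Hq : h t - g t <= 0). { destruct (Req_dec t t0) as [->|]. lra. left; apply Hneg; lra. }
        assert (g t <= g t0) by (apply (mono_down A c g h t0 t HDy); try lra; intros s Hs;
           destruct (Req_dec s t0) as [->|]; [lra| assert (h s - g s < 0) by (apply Hneg; lra); lra]).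
        pose proof (Hgap t ltac:(lra) ltac:(lra)). rewrite Rabs_left1 in H0 by lra. lra.
      + simpl in Ht2. assert (C/2 <= g t) by (apply Hlow; lra). lra. }
  destruct (reach_low A c g h Y3 (us - e) d2 HDy HY3a Hd2 Claim) as [Y4 [HY4 Hlo]].
  exists (Rmax Y2 Y4). intros y Hy. pose proof (Rmax_l Y2 Y4). pose proof (Rmax_r Y2 Y4).
  assert (g y <= us + e) by (apply Hup; lra). assert (us - e <= g y) by (apply Hlo; lra).
  apply Rabs_le; lra.
Qed.

Lemma Rpower_pos x y : 0 < Rpower x y.
Proof. unfold Rpower. apply exp_pos. Qed.

Lemma Rpower_split x p : 0 < x -> Rpower x p = x * Rpower x (p - 1).
Proof. intros Hx. replace p with (1 + (p - 1)) at 1 by ring. rewrite Rpower_plus, Rpower_1; auto. Qed.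

Lemma tangent p w x : 1 < p -> 0 < w -> 0 < x ->
  Rpower x p + p * Rpower x (p - 1) * (w - x) <= Rpower w p.
Proof.
  intros Hp Hw Hx.
  set (phi := fun t => Rpower t p - p * Rpower x (p - 1) * t).
  assert (Hd : forall t, 0 < t -> derivable_pt_lim phi t (p * Rpower t (p - 1) - p * Rpower x (p - 1))).
  { intros t Ht. unfold phi. apply derivable_pt_lim_minus. apply derivable_pt_lim_power; auto.
    replace (p * Rpower x (p - 1)) with (p * Rpower x (p - 1) * 1) at 2 by ring.
    apply derivable_pt_lim_scal. apply derivable_pt_lim_id. }
  destruct (Rtotal_order w x) as [Hlt|[->|Hgt]].
  - destruct (MVT_cor2 phi (fun t => p * Rpower t (p - 1) - p * Rpower x (p - 1)) w x Hlt) as [z [Hz1 Hz2]]. { intros t Ht. apply Hd. lra. }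
    assert (Rpower z (p - 1) <= Rpower x (p - 1)) by (apply Rle_Rpower_l; lra).
    assert ((p * Rpower z (p - 1) - p * Rpower x (p - 1)) * (x - w) <= 0).
    { assert (p * Rpower z (p - 1) - p * Rpower x (p - 1) <= 0) by nra. nra. }
    unfold phi in Hz1. nra.
  - lra.
  - destruct (MVT_cor2 phi (fun t => p * Rpower t (p - 1) - p * Rpower x (p - 1)) x w Hgt) as [z [Hz1 Hz2]]. { intros t Ht. apply Hd. lra. }
    assert (Rpower x (p - 1) <= Rpower z (p - 1)) by (apply Rle_Rpower_l; lra).
    assert (0 <= (p * Rpower z (p - 1) - p * Rpower x (p - 1)) * (w - x)).
    { apply Rmult_le_pos; [|lra]. nra. }
    unfold phi in Hz1. nra.
Qed.

Definition FF p (w x : R) := Rpower w p - w / 2 + (/ 2 - / p) * x.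

Lemma gapU p us e : 1 < p -> 0 < us -> Rpower us (p - 1) = / p -> 0 < e ->
  exists d eta, 0 < d /\ 0 < eta /\ forall x w, us + e <= x -> 0 < w -> x - d < w -> eta <= FF p w x.
Proof.
  intros Hp Hus Hu He.
  set (X1 := us + e). set (s1 := Rpower X1 (p - 1)).
  assert (Hs1 : / p < s1) by (rewrite <- Hu; apply Rlt_Rpower_l; unfold X1; lra).
  assert (Hip : 0 < / p) by (apply Rinv_0_lt_compat; lra).
  assert (Hpi : p * / p = 1) by (field; lra).
  set (m := X1 * (s1 - / p)).
  assert (Hm : 0 < m) by (unfold m, X1; nra).
  exists (Rmin (X1 / (2 * p)) (m / 4)), (m / 4).
  assert (Hd1 : Rmin (X1 / (2 * p)) (m / 4) <= X1 / (2*p)) by apply Rmin_l.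
  assert (Hd2 : Rmin (X1 / (2 * p)) (m / 4) <= m / 4) by apply Rmin_r.
  assert (Hd0 : 0 < Rmin (X1 / (2 * p)) (m / 4)).
  { apply Rmin_glb_lt; [|lra]. unfold Rdiv. apply Rmult_lt_0_compat. unfold X1; lra.
    apply Rinv_0_lt_compat; lra. }
  set (d := Rmin (X1 / (2 * p)) (m / 4)) in *.
  split; [auto|split; [lra|]].
  intros x w Hx Hw Hxw. unfold FF.
  assert (Hx0 : 0 < x) by (unfold X1 in Hx; lra).
  pose proof (tangent p w x Hp Hw Hx0) as T.
  rewrite (Rpower_split x p Hx0) in T.
  set (s := Rpower x (p - 1)) in *.
  assert (Hs : s1 <= s) by (unfold s1, s; apply Rle_Rpower_l; unfold X1 in *; lra).
  assert (HX1 : 0 < X1) by (unfold X1; lra).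
  assert (Hps : 1 < p * s) by (rewrite <- Hpi; apply Rmult_lt_compat_l; lra).
  assert (Hdp : d * p <= X1 / 2).
  { replace (X1 / 2) with (X1 / (2 * p) * p) by (field; lra). apply Rmult_le_compat_r; lra. }
  assert (Key : x * s - x / 2 + (/ 2 - / p) * x + (w - x) * (p * s - / 2) >= m / 4).
  { destruct (Rle_or_lt x w) as [Hwx|Hwx].
    - assert (0 <= (w - x) * (p * s - / 2)) by (apply Rmult_le_pos; nra).
      assert (x * (s - / p) >= m). { unfold m. apply Rle_ge. apply Rmult_le_compat; lra. }
      nra.
    - assert ((w - x) * (p * s - / 2) >= - d * (p * s)) by nra.
      assert ((x - d * p) * (s - / p) >= (X1 / 2) * (s1 - / p)).
      { apply Rle_ge. apply Rmult_le_compat; lra. }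
      assert (x * s - x / 2 + (/ 2 - / p) * x - d * (p * s) = (x - d * p) * (s - / p) - d).
      { replace (x / 2) with (x * / 2) by (unfold Rdiv; ring).
        replace (x * s - x * / 2 + (/ 2 - / p) * x - d * (p * s)) with (x * s - x * / p - d * (p * s)) by ring.
        field; lra. }
      unfold m in *. nra. }
  nra.
Qed.

Lemma gapL p us e a : 1 < p -> 0 < us -> Rpower us (p - 1) = / p -> 0 < e < us -> 0 < a ->
  exists d eta, 0 < d /\ 0 < eta /\ forall x w, a <= x <= us - e -> 0 < w -> Rabs (w - x) < d ->
    FF p w x <= - eta.
Proof.
  intros Hp Hus Hu He Ha.
  set (s2 := Rpower (us - e) (p - 1)).
  assert (Hs2 : s2 < / p) by (rewrite <- Hu; apply Rlt_Rpower_l; lra).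
  assert (Hip : 0 < / p) by (apply Rinv_0_lt_compat; lra).
  assert (Hpi : p * / p = 1) by (field; lra).
  set (m := a * (/ p - s2)).
  assert (Hm : 0 < m) by (unfold m; nra).
  exists (Rmin e (m / 3)), (m / 2).
  assert (Hd1 : Rmin e (m / 3) <= e) by apply Rmin_l.
  assert (Hd2 : Rmin e (m / 3) <= m / 3) by apply Rmin_r.
  assert (Hd0 : 0 < Rmin e (m / 3)) by (apply Rmin_glb_lt; lra).
  set (d := Rmin e (m / 3)) in *.
  split; [auto|split; [lra|]].
  intros x w Hx Hw Hwx. unfold FF.
  apply Rabs_def2 in Hwx. destruct Hwx as [Hwx1 Hwx2].
  assert (Hx0 : 0 < x) by lra.
  pose proof (tangent p x w Hp Hx0 Hw) as T.
  set (t := Rpower w (p - 1)) in *.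
  assert (Ht : t <= / p) by (rewrite <- Hu; apply Rle_Rpower_l; lra).
  assert (Ht0 : 0 < t) by apply Rpower_pos.
  assert (Hwp : Rpower w p <= Rpower x p + d).
  { destruct (Rle_or_lt x w).
    - assert (p * t <= 1) by (rewrite <- Hpi; apply Rmult_le_compat_l; lra).
      assert (p * t * (w - x) <= w - x) by nra. nra.
    - assert (0 <= p * t * (x - w)) by (apply Rmult_le_pos; [apply Rmult_le_pos|]; lra). lra. }
  rewrite (Rpower_split x p Hx0) in Hwp.
  set (s := Rpower x (p - 1)) in *.
  assert (Hs : s <= s2) by (apply Rle_Rpower_l; lra).
  assert (x * (s - / p) <= - m). { unfold m. assert (a * (s - / p) <= a * (s2 - / p)) by nra. nra. }
  nra.
Qed.

Lemma dpl_eq f x l l' : derivable_pt_lim f x l -> l = l' -> derivable_pt_lim f x l'.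
Proof. intros H ->; exact H. Qed.

Theorem lemma7p5 (p sigma A C : R) (phi phi1 phi2 : R -> R) :
  1 < p ->
  (sigma = -1 \/ sigma = 1) ->
  0 < A ->
  0 < C ->
  (* phi is C^2 on (A, oo): phi' = phi1, phi'' = phi2, phi2 continuous *)
  (forall y, A < y -> is_derive phi y (phi1 y)) ->
  (forall y, A < y -> is_derive phi1 y (phi2 y)) ->
  (forall y, A < y -> continuous phi2 y) ->
  (* the ODE  sigma phi'' = y phi'/2 - gamma phi - |phi'|^p *)
  (forall y, A < y ->
     sigma * phi2 y = / 2 * y * phi1 y - (p - 2) / (2 * (p - 1)) * phi y
                      - rpow (Rabs (phi1 y)) p) ->
  (* phi'(y) >= C y^beta *)
  (forall y, A < y -> C * Rpower y (/ (p - 1)) <= phi1 y) ->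
  (* |phi''(y)| = o(y^(beta+1)) *)
  is_lim (fun y => Rabs (phi2 y) / Rpower y (/ (p - 1) + 1)) p_infty 0 ->
  is_lim (fun y => phi y / Rpower y (/ (p - 1) + 1)) p_infty
         (Rpower p (- / (p - 1)) / (/ (p - 1) + 1)).
Proof.
  intros Hp Hsig HA HC Hd1 Hd2 _ Hode Hlow Hlim.
  set (b := / (p - 1)) in *.
  assert (Hb : 0 < b) by (unfold b; apply Rinv_0_lt_compat; lra).
  assert (Hbp : b * (p - 1) = 1) by (unfold b; field; lra).
  set (c := b + 1) in *.
  assert (Hc : 0 < c) by (unfold c; lra).
  set (us := Rpower p (- b)).
  assert (Hus : 0 < us) by apply Rpower_pos.
  assert (Husp : Rpower us (p - 1) = / p).
  { unfold us. rewrite Rpower_mult. replace (- b * (p - 1)) with (- (1)) by lra.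
    rewrite Rpower_Ropp, Rpower_1; lra. }
  set (g := fun y => (c * phi y) / Rpower y c).
  set (h := fun y => phi1 y / Rpower y b).
  assert (Hyc : forall y, 0 < y -> Rpower y c = y * Rpower y b).
  { intros y Hy. unfold c. rewrite Rplus_comm, Rpower_plus, Rpower_1; auto. }
  assert (Hh1 : forall y, A < y -> C <= h y).
  { intros y Hy. unfold h. pose proof (Rpower_pos y b). pose proof (Hlow y Hy).
    apply (Rmult_le_reg_r (Rpower y b)); auto. unfold Rdiv. rewrite Rmult_assoc, Rinv_l; lra. }
  assert (Hphi1 : forall y, A < y -> 0 < phi1 y).
  { intros y Hy. pose proof (Rpower_pos y b). pose proof (Hlow y Hy). nra. }
  assert (Hid : forall y, A < y -> FF p (h y) (g y) = - sigma * phi2 y / Rpower y c).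
  { intros y Hy. unfold FF, g, h.
    pose proof (Rpower_pos y b) as Pb. pose proof (Hphi1 y Hy) as P1.
    assert (Hr : rpow (Rabs (phi1 y)) p = Rpower (phi1 y / Rpower y b) p * Rpower y c).
    { unfold rpow. rewrite Rabs_right by lra. destruct (Req_EM_T (phi1 y) 0); [lra|].
      replace (Rpower y c) with (Rpower (Rpower y b) p) by (rewrite Rpower_mult; f_equal; unfold c; lra).
      rewrite Rpower_mult_distr by (try lra; unfold Rdiv; apply Rmult_lt_0_compat; auto; apply Rinv_0_lt_compat; auto).
      f_equal. field. lra. }
    pose proof (Hode y Hy) as E. rewrite Hr in E.
    rewrite Hyc in * by lra.
    set (Q := Rpower (phi1 y / Rpower y b) p) in *.
    assert (Hg : (p - 2) / (2 * (p - 1)) = (/ 2 - / p) * c) by (unfold c, b; field; lra).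
    rewrite Hg in E. replace (- sigma * phi2 y) with (- (sigma * phi2 y)) by ring.
    rewrite E. field. lra. }
  assert (Hid2 : forall y, A < y -> Rabs (FF p (h y) (g y)) = Rabs (phi2 y) / Rpower y c).
  { intros y Hy. rewrite Hid by auto. pose proof (Rpower_pos y c).
    assert (Habs : Rabs (- sigma) = 1) by (destruct Hsig as [-> | ->]; [rewrite Rabs_Ropp, Rabs_left by lra; lra|rewrite Rabs_Ropp; apply Rabs_R1]).
    unfold Rdiv. rewrite Rabs_mult, Rabs_mult, Habs, (Rabs_right (/ _)). ring.
    left; apply Rinv_0_lt_compat; auto. }
  apply is_lim_spec in Hlim. simpl in Hlim.
  assert (Elim : forall eta, 0 < eta -> exists Y, forall y, Y < y -> A < y -> Rabs (FF p (h y) (g y)) < eta).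
  { intros eta He. destruct (Hlim (mkposreal eta He)) as [Y HY]. exists Y. intros y Hy HAy.
    specialize (HY y Hy). simpl in HY. rewrite Hid2 by auto. rewrite Rminus_0_r in HY.
    rewrite Rabs_right in HY; auto. apply Rle_ge. unfold Rdiv. apply Rmult_le_pos. apply Rabs_pos.
    left; apply Rinv_0_lt_compat, Rpower_pos. }
  assert (HD : DynH A c g h).
  { repeat split; auto.
    - intros y Hy. unfold g.
      assert (Hy0 : 0 < y) by lra. pose proof (Rpower_pos y b) as Pb.
      eapply dpl_eq.
      + apply (derivable_pt_lim_div (fun y => c * phi y) (fun y => Rpower y c)).
        * apply derivable_pt_lim_scal. apply is_derive_Reals. auto.
        * apply derivable_pt_lim_power. lra.
        * pose proof (Rpower_pos y c). lra.
      + unfold h. replace (c - 1) with b by (unfold c; ring). rewrite Hyc by lra. unfold g, Rsqr. field. lra.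
    - intros y Hy. unfold h. apply continuity_pt_div.
      + apply der_cont with (phi2 y). apply is_derive_Reals. auto.
      + apply der_cont with (b * Rpower y (b - 1)). apply derivable_pt_lim_power. lra.
      + pose proof (Rpower_pos y b). lra. }
  assert (Conv := dyn_conv A c g h C us HD HC Hh1 Hus).
  assert (Fin : forall e, 0 < e < us -> exists Y, forall y, Y < y -> Rabs (g y - us) <= e).
  { apply Conv.
    - intros e He. destruct (gapU p us e Hp Hus Husp He) as [d [eta [Hd [Heta G]]]].
      exists d. split; auto. destruct (Elim eta Heta) as [Y HY]. exists (Rmax Y A).
      intros y Hy Hg. pose proof (Rmax_l Y A). pose proof (Rmax_r Y A).
      destruct (Rle_or_lt (h y) (g y - d)) as [|Hgt]; auto. exfalso.
      assert (eta <= FF p (h y) (g y)) by (apply G; auto; pose proof (Hh1 y ltac:(lra)); lra).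
      specialize (HY y ltac:(lra) ltac:(lra)). pose proof (Rle_abs (FF p (h y) (g y))). lra.
    - intros e a He Ha. destruct (gapL p us e a Hp Hus Husp He Ha) as [d [eta [Hd [Heta G]]]].
      exists d. split; auto. destruct (Elim eta Heta) as [Y HY]. exists (Rmax Y A).
      intros y Hy Hg. pose proof (Rmax_l Y A). pose proof (Rmax_r Y A).
      destruct (Rle_or_lt d (Rabs (h y - g y))) as [|Hlt]; auto. exfalso.
      assert (FF p (h y) (g y) <= - eta) by (apply G; auto; pose proof (Hh1 y ltac:(lra)); lra).
      specialize (HY y ltac:(lra) ltac:(lra)). pose proof (Rabs_Ropp (FF p (h y) (g y))).
      pose proof (Rle_abs (- FF p (h y) (g y))). lra. }
  apply is_lim_spec. simpl. intros eps.
  destruct (Fin (Rmin (eps * c / 2) (us / 2))) as [Y HY].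
  { split. apply Rmin_glb_lt. pose proof (cond_pos eps). nra. lra.
    pose proof (Rmin_r (eps * c / 2) (us / 2)). lra. }
  exists (Rmax Y A). intros y Hy. pose proof (Rmax_l Y A). pose proof (Rmax_r Y A).
  specialize (HY y ltac:(lra)). pose proof (Rmin_l (eps * c / 2) (us / 2)).
  pose proof (Rpower_pos y c).
  replace (phi y / Rpower y c - us / c) with ((g y - us) / c) by (unfold g; field; lra).
  unfold Rdiv. rewrite Rabs_mult, (Rabs_right (/ c)) by (left; apply Rinv_0_lt_compat; lra).
  apply (Rmult_lt_reg_r c); auto. rewrite Rmult_assoc, Rinv_l by lra.
  pose proof (cond_pos eps). nra.
Qed.
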